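(* (1) For every $0\le k\le r$, $S^k(0)=(0)\subseteq R_k$. (2) For every $1\le\ell\le r$ and $0\le k\le\ell$, $L^{\ell-k}S^k(0)=J_{\ell,k}(0)\subseteq R_\ell$. (3) For every $1\le\ell\le r$ and $0\le k\le\ell-2$, $S\,L^{\ell-k-1}S^k(0)=L^{\ell-k}S^k(0)$. Here the iterated operators start from the zero ideal of $R_0$.
   Context: Fix a prime $p$ and an integer $r\ge0$. For $0\le k\le r$ let $R_k$ be the commutative ring which is free as a $\mathbb{Z}$-module with basis $X_{k,0},\dots,X_{k,k}$ and multiplication $X_{k,i}X_{k,j}=p^{k-\max(i,j)}X_{k,\min(i,j)}$; thus $X_{k,k}=1$, and an integer $n$ is identified with $nX_{k,k}$. For $0\le k\le\ell\le r$ define: the additive map $\mathrm{ind}^\ell_k:R_k\to R_\ell$, $X_{k,i}\mapsto X_{\ell,i}$; the ring homomorphism $\mathrm{res}^\ell_k:R_\ell\to R_k$, $\mathrm{res}^\ell_k(X_{\ell,i})=p^{\ell-k}X_{k,i}$ if $i\le k$ and $=p^{\ell-i}$ if $i\ge k$; and the multiplicative map $\mathrm{jnd}^\ell_k:R_k\to R_\ell$, $$\mathrm{jnd}^\ell_k\Big(\sum_{i=0}^k m_iX_{k,i}\Big)=m_kX_{\ell,\ell}+\sum_{k\le i<\ell}\frac{m_k^{p^{\ell-i}}-m_k^{p^{\ell-i-1}}}{p^{\ell-i}}X_{\ell,i}+\sum_{0\le i<k}\frac{(\sum_{s=i}^k m_sp^{k-s})^{p^{\ell-k}}-(\sum_{s=i+1}^k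 m_sp^{k-s})^{p^{\ell-k}}}{p^{\ell-i}}X_{\ell,i}$$ ($m_i\in\mathbb{Z}$). For $1\le k\le r$ and an ideal $I\subseteq R_{k-1}$: $L(I)=(\mathrm{res}^k_{k-1})^{-1}(I)\subseteq R_k$, and $S(I)$ is the ideal of $R_k$ generated by $\mathrm{ind}^k_{k-1}(I)\cup\mathrm{jnd}^k_{k-1}(I)$; $L^n,S^n$ are iterates (each step raising the index by one). For $0\le i\le\ell$, $F_{\ell,i}=X_{\ell,i}-p^{\ell-i}$; for $0\le k\le\ell$ and $x\in\mathbb{Z}$, $J_{\ell,k}(x)\subseteq R_\ell$ is the ideal generated by $x,F_{\ell,k},\dots,F_{\ell,\ell-1}$ if $k\le\ell-1$, and $J_{\ell,\ell}(x)=xR_\ell$. *)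

(* Defs.v *)
From mathcomp Require Import all_boot all_algebra.
Set Implicit Arguments. Unset Strict Implicit. Unset Printing Implicit Defensive.
Import GRing.Theory Num.Theory.
Local Open Scope ring_scope.

(* An element of R_k is represented by its coordinate list
   [:: m_0; ...; m_k] (a seq int of size k.+1) in the basis X_{k,0..k}. *)
Definition elt (k : nat) (x : seq int) : Prop := size x = k.+1.

Definition pz (p e : nat) : int := (p ^ e)%N%:Z.

Definition zeroR (k : nat) : seq int := nseq k.+1 0.
Definition addR (k : nat) (x y : seq int) : seq int :=
  mkseq (fun i => x`_i + y`_i) k.+1.
Definition oppR (k : nat) (x : seq int) : seq int :=
  mkseq (fun i => - x`_i) k.+1.
(* X_{k,i} X_{k,j} = p^(k - max(i,j)) X_{k,min(i,j)} *)
Definition mulR (p k : nat) (x y : seq int) : seq int :=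
  mkseq (fun m => \sum_(i < k.+1) \sum_(j < k.+1)
     (if minn i j == m then x`_i * y`_j * pz p (k - maxn i j) else 0)) k.+1.
(* the integer n viewed in R_k, i.e. n X_{k,k} *)
Definition intR (k : nat) (n : int) : seq int :=
  mkseq (fun i => if i == k then n else 0) k.+1.
Definition X (k i : nat) : seq int := mkseq (fun j => (j == i)%:Z) k.+1.

Definition ind (l k : nat) (x : seq int) : seq int :=
  mkseq (fun i => if (i <= k)%N then x`_i else 0) l.+1.

Definition res (p l k : nat) (x : seq int) : seq int :=
  mkseq (fun j => if (j < k)%N then pz p (l - k) * x`_j
                  else if j == k then \sum_(k <= i < l.+1) pz p (l - i) * x`_i
                  else 0) k.+1.

Definition psum (p k i : nat) (x : seq int) : int :=
  \sum_(i <= s < k.+1) x`_s * pz p (k - s).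

(* jnd^l_k, with the (exact) divisions written as integer divisions *)
Definition jnd (p l k : nat) (x : seq int) : seq int :=
  mkseq (fun i =>
    if i == l then x`_k
    else if (k <= i)%N then
      ((x`_k ^+ (p ^ (l - i)) - x`_k ^+ (p ^ (l - i - 1))) %/ pz p (l - i))%Z
    else
      ((psum p k i x ^+ (p ^ (l - k)) - psum p k i.+1 x ^+ (p ^ (l - k)))
         %/ pz p (l - i))%Z) l.+1.

Definition is_ideal (p k : nat) (I : seq int -> Prop) : Prop :=
  [/\ forall x, I x -> elt k x,
      I (zeroR k),
      forall x y, I x -> I y -> I (addR k x y),
      forall x, I x -> I (oppR k x) &
      forall r x, elt k r -> I x -> I (mulR p k r x)].

Definition gen (p k : nat) (A : seq int -> Prop) : seq int -> Prop :=
  fun x => forall J, is_ideal p k J -> (forall a, A a -> J a) -> J x.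

Definition zero_ideal0 : seq int -> Prop := fun x => x = zeroR 0.

Definition Lop (p k : nat) (I : seq int -> Prop) : seq int -> Prop :=
  fun x => elt k.+1 x /\ I (res p k.+1 k x).
Definition Sop (p k : nat) (I : seq int -> Prop) : seq int -> Prop :=
  gen p k.+1 (fun y => exists2 a, I a &
                  y = ind k.+1 k a \/ y = jnd p k.+1 k a).

Fixpoint Siter (p n : nat) : seq int -> Prop :=
  match n with
  | 0 => zero_ideal0
  | n'.+1 => Sop p n' (Siter p n')
  end.

Fixpoint Liter (p n k : nat) (I : seq int -> Prop) : seq int -> Prop :=
  match n with
  | 0 => I
  | n'.+1 => Lop p (k + n') (Liter p n' k I)
  end.

Definition F (p l i : nat) : seq int := addR l (X l i) (oppR l (intR l (pz p (l - i)))).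

Definition Jid (p l k : nat) (x : int) : seq int -> Prop :=
  if (k <= l.-1)%N && (0 < l)%N then
    gen p l (fun y => y = intR l x \/ exists2 i : nat, (k <= i < l)%N & y = F p l i)
  else gen p l (fun y => y = intR l x).

Definition same_ideal (I J : seq int -> Prop) : Prop := forall x, I x <-> J x.

(* Main.v *)
Require Import Defs.
From mathcomp Require Import all_boot all_algebra ring lra zify.
Import GRing.Theory Num.Theory.
Local Open Scope ring_scope.

Lemma fermat_int (p : nat) (a : int) : prime p -> (p%:Z %| a ^+ p - a)%Z.
Proof.
move=> hp; rewrite -eqz_mod_dvd; apply/eqP.
have p0 : (p%:Z != 0) by rewrite eqz_nat -lt0n prime_gt0.
have := modz_ge0 a p0.
rewrite -modzXm -[in RHS](modz_mod a).
case: (a %% p)%Z => // n _.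
rewrite -natz -natrX natz !modz_nat natz modz_nat; congr Posz; exact: fermat_little.
Qed.

Lemma binom_dvd (p : nat) (d y t : int) : prime p -> (p%:Z %| d)%Z -> (d %| t)%Z ->
  (p%:Z * d %| (y + t) ^+ p - y ^+ p)%Z.
Proof.
move=> hp pd dt.
rewrite exprDn big_ord_recl /= subn0 expr0 mulr1 bin0 mulr1n addrAC subrr add0r.
rewrite -/(dvdz _ _); apply: rpred_sum => i _.
rewrite /bump /= add1n.
have hi : (i.+1 <= p)%N := ltn_ord i.
rewrite -mulr_natr.
case: (ltngtP i.+1 p) hi => // [hlt|heq] _.
  have [q ->] : exists q, 'C(p, i.+1) = (q * p)%N.
    by apply/dvdnP; apply: prime_dvd_bin; rewrite ?hlt.
  have -> : y ^+ (p - i.+1) * t ^+ i.+1 * (q * p)%N%:R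
     = (p%:Z) * (t * (y ^+ (p - i.+1) * t ^+ i * q%:R)).
    by rewrite natrM exprS natz; ring.
  by apply: dvdz_mul => //; apply: dvdz_mulr.
rewrite heq subnn binn expr0 mul1r mulr1.
have p1 : (0 < p.-1)%N by rewrite -subn1 subn_gt0 prime_gt1.
have -> : t ^+ p = t ^+ p.-1 * t by rewrite -exprSr prednK ?prime_gt0.
apply: dvdz_mul => //; apply: dvdz_exp => //.
exact: dvdz_trans pd dt.
Qed.

Lemma sum_ord_if (n m : nat) (c : int) : (m < n)%N ->
  \sum_(i < n) (if (i : nat) == m then c else 0) = c.
Proof.
move=> H; rewrite (bigD1 (Ordinal H)) //= eqxx big1 ?addr0 // => i.
by rewrite -val_eqE /= => /negbTE ->.
Qed.

Lemma sum_ge (n m : nat) (f : nat -> int) : (m <= n)%N ->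
  \sum_(j < n) (if (m <= j)%N then f j else 0) = \sum_(m <= j < n) f j.
Proof.
move=> H; rewrite -(big_mkord xpredT (fun j => if (m <= j)%N then f j else 0)) (@big_cat_nat _ _ _ m 0 n _ _ (leq0n m) H) /=.
rewrite big1_seq ?add0r; last first.
  by move=> j; rewrite mem_index_iota => /andP[_ /andP[_ hj]]; rewrite leqNgt hj.
by apply: eq_big_nat => j /andP[hj _]; rewrite hj.
Qed.

Lemma psum_rec p l i x : (i <= l)%N ->
  psum p l i x = x`_i * pz p (l - i) + psum p l i.+1 x.
Proof. by move=> H; rewrite /psum big_ltn. Qed.

Lemma psum_last p l x : psum p l l.+1 x = 0.
Proof. by rewrite /psum big_geq. Qed.

Lemma sum_if_out1 n m (G : nat -> int) : (m < n)%N ->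
  \sum_(i < n) \sum_(j < n) (if (i:nat) == m then G j else 0) = \sum_(j < n) G j.
Proof.
move=> H.
rewrite (eq_bigr (fun i : 'I_n => if (i:nat) == m then \sum_(j < n) G j else 0)).
  exact: sum_ord_if.
by move=> i _; case: eqP => _ //; rewrite big1.
Qed.

Lemma sum_if_out2 n m (H : nat -> int) : (m < n)%N ->
  \sum_(i < n) \sum_(j < n) (if (j:nat) == m then H i else 0) = \sum_(i < n) H i.
Proof. by move=> Hm; apply: eq_bigr => i _; rewrite sum_ord_if. Qed.

Lemma mulR_nth p l r x m : (m <= l)%N ->
  (mulR p l r x)`_m = r`_m * psum p l m x + x`_m * psum p l m.+1 r.
Proof.
move=> Hm; rewrite /mulR nth_mkseq //.
have E : forall i j : nat,
  (if minn i j == m then r`_i * x`_j * pz p (l - maxn i j) else 0) =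
  (if i == m then (if (m <= j)%N then r`_m * (x`_j * pz p (l - j)) else 0) else 0) +
  (if j == m then (if (m < i)%N then x`_m * (r`_i * pz p (l - i)) else 0) else 0).
  move=> i j.
  case: (leqP i j) => h.
    have [eim|nim] := eqVneq i m.
      by subst i; rewrite h ltnn; case: eqP => _; rewrite addr0 mulrA.
    rewrite add0r; have [ejm|//] := eqVneq j m.
    by subst j; rewrite ifF //; apply/negbTE; rewrite -leqNgt.
  have [eim|] := eqVneq i m.
    by subst i; rewrite (ltn_eqF h) leqNgt h addr0.
  move=> _; rewrite add0r; have [ejm|//] := eqVneq j m.
  by subst j; rewrite h mulrCA mulrA.
have Hm1 : (m < l.+1)%N by [].
transitivity (\sum_(i < l.+1) ((if (i:nat) == m then r`_m * psum p l m x else 0)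
   + (if (m < i)%N then x`_m * (r`_i * pz p (l - i)) else 0))).
  apply: eq_bigr => i _.
  under eq_bigr do rewrite E.
  rewrite big_split /= sum_ord_if //.
  have [him|him] := eqVneq (i:nat) m.
    rewrite (@sum_ge l.+1 m (fun j => r`_m * (x`_j * pz p (l - j)))); last exact: ltnW.
    by rewrite [in RHS]/psum -mulr_sumr.
  by rewrite big1_eq.
rewrite big_split /= sum_ord_if //.
rewrite (@sum_ge l.+1 m.+1 (fun i => x`_m * (r`_i * pz p (l - i)))); last exact: Hm1.
by rewrite [in RHS]/psum -mulr_sumr.
Qed.

Lemma nth_addR k x y i : (i <= k)%N -> (addR k x y)`_i = x`_i + y`_i.
Proof. by move=> H; rewrite /addR nth_mkseq. Qed.
Lemma nth_oppR k x i : (i <= k)%N -> (oppR k x)`_i = - x`_i.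
Proof. by move=> H; rewrite /oppR nth_mkseq. Qed.
Lemma nth_intR k n i : (i <= k)%N -> (intR k n)`_i = if i == k then n else 0.
Proof. by move=> H; rewrite /intR nth_mkseq. Qed.
Lemma nth_zeroR k i : (zeroR k)`_i = 0.
Proof. by rewrite /zeroR nth_nseq if_same. Qed.
Lemma nth_X k i j : (j <= k)%N -> (X k i)`_j = (j == i)%:Z.
Proof. by move=> H; rewrite /X nth_mkseq. Qed.
Lemma nth_ind l k x i : (i <= l)%N -> (ind l k x)`_i = if (i <= k)%N then x`_i else 0.
Proof. by move=> H; rewrite /ind nth_mkseq. Qed.
Lemma nth_F p l i j : (j <= l)%N ->
  (F p l i)`_j = (j == i)%:Z - (j == l)%:Z * pz p (l - i).
Proof.
move=> H; rewrite /F nth_addR // nth_X // nth_oppR // nth_intR //.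
by case: (j == l); rewrite ?mul1r ?mul0r ?oppr0.
Qed.

Lemma seq_eq k (x y : seq int) : size x = k.+1 -> size y = k.+1 ->
  (forall i, (i <= k)%N -> x`_i = y`_i) -> x = y.
Proof.
move=> sx sy H; apply: (eq_from_nth (x0 := 0)); first by rewrite sx sy.
by move=> i; rewrite sx ltnS; apply: H.
Qed.

Lemma size_addR k x y : size (addR k x y) = k.+1. Proof. by rewrite size_mkseq. Qed.
Lemma size_oppR k x : size (oppR k x) = k.+1. Proof. by rewrite size_mkseq. Qed.
Lemma size_mulR p k x y : size (mulR p k x y) = k.+1. Proof. by rewrite size_mkseq. Qed.
Lemma size_intR k n : size (intR k n) = k.+1. Proof. by rewrite size_mkseq. Qed.
Lemma size_zeroR k : size (zeroR k) = k.+1. Proof. by rewrite size_nseq. Qed.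
Lemma size_ind l k x : size (ind l k x) = l.+1. Proof. by rewrite size_mkseq. Qed.
Lemma size_jnd p l k x : size (jnd p l k x) = l.+1. Proof. by rewrite size_mkseq. Qed.
Lemma size_F p l i : size (F p l i) = l.+1. Proof. by rewrite size_mkseq. Qed.

Lemma psum_zero p l i : psum p l i (zeroR l) = 0.
Proof. by rewrite /psum big1 // => s _; rewrite nth_zeroR mul0r. Qed.

Lemma pzE p e : pz p e = (p%:Z) ^+ e.
Proof. by rewrite /pz -[LHS]natz natrX natz. Qed.
Lemma pz0 p : pz p 0 = 1. Proof. by rewrite pzE expr0. Qed.


Lemma psum_intR p l i c : (i <= l)%N -> psum p l i (intR l c) = c.
Proof.
move=> H; rewrite /psum (@big_cat_nat _ _ _ l); [|exact: H|exact: leqnSn].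
rewrite big_nat1 nth_intR ?leqnn // eqxx subnn pz0 mulr1.
rewrite big1_seq /=; first by rewrite add0r.
move=> s; rewrite mem_index_iota => /andP[_ hs].
by rewrite nth_intR ?(ltnW hs) // (ltn_eqF hs) mul0r.
Qed.

Lemma psum_empty p l i x : (l.+1 <= i)%N -> psum p l i x = 0.
Proof. by move=> H; rewrite /psum big_geq. Qed.

Lemma psum_addR p l i x y : psum p l i (addR l x y) = psum p l i x + psum p l i y.
Proof.
rewrite /psum -big_split /=; apply: eq_big_nat => s /andP[_ hs].
by rewrite nth_addR ?mulrDl.
Qed.

Lemma psum_oppR p l i x : psum p l i (oppR l x) = - psum p l i x.
Proof.
rewrite /psum -sumrN /=; apply: eq_big_nat => s /andP[_ hs].
by rewrite nth_oppR ?mulNr.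
Qed.

Lemma psum_shift p l m k x : (m <= k)%N -> (k <= l.+1)%N ->
  (forall s, (m <= s < k)%N -> x`_s = 0) -> psum p l m x = psum p l k x.
Proof.
move=> h1 h2 H; rewrite /psum (@big_cat_nat _ _ _ k); [|exact: h1|exact: h2].
rewrite /= big1_seq /=; first by rewrite add0r.
by move=> s; rewrite mem_index_iota => hs; rewrite H ?mul0r.
Qed.

Lemma nth_res p l k x j : (j <= k)%N -> (res p l k x)`_j =
  if (j < k)%N then pz p (l - k) * x`_j
  else \sum_(k <= i < l.+1) pz p (l - i) * x`_i.
Proof. move=> H; rewrite /res nth_mkseq //; case: ltngtP H => // -> _; rewrite eqxx. Qed.

Lemma nth_jnd p l k x i : (i <= l)%N -> (jnd p l k x)`_i =
    if i == l then x`_k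
    else if (k <= i)%N then
      ((x`_k ^+ (p ^ (l - i)) - x`_k ^+ (p ^ (l - i - 1))) %/ pz p (l - i))%Z
    else
      ((psum p k i x ^+ (p ^ (l - k)) - psum p k i.+1 x ^+ (p ^ (l - k)))
         %/ pz p (l - i))%Z.
Proof. by move=> H; rewrite /jnd nth_mkseq. Qed.

Lemma psum_res p m k x : (k <= m)%N ->
  psum p m k (res p m.+1 m x) = psum p m.+1 k x.
Proof.
move=> H; rewrite /psum big_nat_recr /=; last exact: H.
rewrite big_nat_recr /=; last exact: (leq_trans H (leqnSn m)).
rewrite big_nat_recr /=; last exact: H.
rewrite nth_res ?leqnn // ltnn subnn pz0 mulr1.
rewrite big_nat_recr /= ?leqnSn // big_nat1 subSnn subnn pz0 mul1r -addrA.
congr (_ + _).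
  apply: eq_big_nat => s /andP[_ hs].
  rewrite nth_res ?(ltnW hs) // hs subSnn !pzE (subSn (ltnW hs)); rewrite [in RHS]exprS; ring.
by rewrite mulr1 mulrC.
Qed.

Lemma size_res p l k x : size (res p l k x) = k.+1. Proof. by rewrite size_mkseq. Qed.

Lemma F_def p l i : F p l i = addR l (X l i) (oppR l (intR l (pz p (l - i)))).
Proof. by []. Qed.

Lemma psum_X p l k i : (k <= i <= l)%N -> psum p l k (X l i) = pz p (l - i).
Proof.
move=> /andP[ki il].
rewrite /psum (@big_cat_nat _ _ _ i); [|exact: ki|exact: (leq_trans il (leqnSn l))].
rewrite /= (@big_ltn _ _ _ i l.+1); last exact: il.
rewrite nth_X // eqxx mul1r.
rewrite (@big1_seq _ _ _ _ (index_iota k i)) /=; last first.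
  move=> s; rewrite mem_index_iota => /andP[_ hs].
  by rewrite nth_X ?(ltn_eqF hs) ?mul0r //; apply: ltnW (leq_trans hs il).
rewrite (@big1_seq _ _ _ _ (index_iota i.+1 l.+1)) /=; first by rewrite add0r addr0.
move=> s; rewrite mem_index_iota => /andP[hs hs'].
by rewrite nth_X ?(gtn_eqF hs) ?mul0r.
Qed.

Lemma psum_ind p m k a : (k <= m)%N ->
  psum p m.+1 k (ind m.+1 m a) = pz p 1 * psum p m k a.
Proof.
move=> km; rewrite /psum big_nat_recr; last exact: (leq_trans km (leqnSn m)).
rewrite nth_ind // ltnn mul0r /= addr0 mulr_sumr.
apply: eq_big_nat => s /andP[_ hs].
have hs2 : (s <= m)%N by []. rewrite nth_ind; last exact: (leq_trans hs2 (leqnSn m)). rewrite hs2 !pzE (subSn hs2) exprS; ring.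
Qed.

Lemma psum_split2 p m k c : (k <= m)%N ->
  psum p m.+1 k c = \sum_(k <= s < m) c`_s * pz p (m.+1 - s) + c`_m * pz p 1 + c`_m.+1.
Proof.
move=> km; rewrite /psum big_nat_recr; last exact: (leq_trans km (leqnSn m)).
rewrite big_nat_recr; last exact: km.
by rewrite /= subnn pz0 mulr1 subSnn.
Qed.

Opaque mulR psum jnd res ind addR oppR intR X F zeroR pz.

Lemma nth_mulR_intR p l c y m : (m <= l)%N -> (mulR p l (intR l c) y)`_m = c * y`_m.
Proof.
move=> Hm; rewrite mulR_nth; last exact: Hm.
rewrite nth_intR; last exact: Hm.
case: eqP => [->|/eqP ne].
  rewrite psum_last (psum_rec p l l _ (leqnn l)) psum_last subnn pz0.
  by rewrite mulr0 addr0 addr0 mulr1.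
have lt : (m < l)%N by rewrite ltn_neqAle ne Hm.
by rewrite mul0r add0r psum_intR; [exact: mulrC | exact: lt].
Qed.



Lemma psum_mul p l r x i : psum p l i (mulR p l r x) = psum p l i r * psum p l i x.
Proof.
case: (leqP i l.+1) => hi; last by rewrite !psum_empty ?mul0r //; apply: ltnW.
move: hi; move Hd: (l.+1 - i)%N => d.
elim: d i Hd => [|d IH] i Hd hi.
  have -> : i = l.+1 by apply/eqP; rewrite eqn_leq hi /= -subn_eq0 Hd.
  by rewrite !psum_last mul0r.
have hil : (i <= l)%N by rewrite -ltnS -subn_gt0 Hd.
rewrite (psum_rec p l i _ hil) (psum_rec p l i r hil) (psum_rec p l i x hil).
rewrite (IH i.+1); [|by rewrite subnS Hd|exact: hil].
rewrite mulR_nth; last exact: hil.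
rewrite (psum_rec p l i x hil).
ring.
Qed.

Definition kerP p l k x := [/\ size x = l.+1, forall i, (i < k)%N -> x`_i = 0 & psum p l k x = 0].

Lemma elt_ideal p k : is_ideal p k (elt k).
Proof.
split; rewrite /elt //.
- exact: size_zeroR.
- by move=> x y _ _; apply: size_addR.
- by move=> x _; apply: size_oppR.
- by move=> r x _ _; apply: size_mulR.
Qed.

Lemma gen_ideal p k A : (forall a, A a -> elt k a) -> is_ideal p k (gen p k A).
Proof.
move=> hA; split.
- by move=> x hx; apply: hx; [exact: elt_ideal | exact: hA].
- by move=> J [_ ? _ _ _].
- by move=> x y hx hy J hJ hAJ; case: (hJ) => _ _ hadd _ _; apply: hadd; [apply: hx|apply: hy].
- by move=> x hx J hJ hAJ; case: (hJ) => _ _ _ hopp _; apply: hopp; apply: hx.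
- by move=> r x hr hx J hJ hAJ; case: (hJ) => _ _ _ _ hmul; apply: hmul => //; apply: hx.
Qed.

Lemma gen_base p k A a : A a -> gen p k A a.
Proof. by move=> h J _ hJ; apply: hJ. Qed.

Lemma gen_min p k A J : is_ideal p k J -> (forall a, A a -> J a) -> forall x, gen p k A x -> J x.
Proof. by move=> hJ hA x hx; apply: hx. Qed.

Lemma zero_ideal p k : is_ideal p k (fun x => x = zeroR k).
Proof.
split.
- by move=> x ->; apply: size_zeroR.
- by [].
- move=> x y -> ->; apply: (@seq_eq k); rewrite ?size_addR ?size_zeroR //.
  by move=> i hi; rewrite nth_addR // !nth_zeroR addr0.
- move=> x ->; apply: (@seq_eq k); rewrite ?size_oppR ?size_zeroR //.
  by move=> i hi; rewrite nth_oppR // !nth_zeroR oppr0.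
- move=> r x _ ->; apply: (@seq_eq k); rewrite ?size_mulR ?size_zeroR //.
  move=> i hi; rewrite mulR_nth; last exact: hi.
  by rewrite psum_zero !nth_zeroR mulr0 mul0r addr0.
Qed.

Lemma kerP_ideal p l k : (0 < p)%N -> (k <= l)%N -> is_ideal p l (kerP p l k).
Proof.
move=> p0 kl; split.
- by move=> x [].
- split; first exact: size_zeroR.
  + by move=> i _; rewrite nth_zeroR.
  + exact: psum_zero.
- move=> x y [sx hx px] [sy hy py]; split; first exact: size_addR.
  + by move=> i hi; rewrite nth_addR ?hx ?hy ?addr0 //; apply: ltnW (leq_trans hi kl).
  + by rewrite psum_addR px py addr0.
- move=> x [sx hx px]; split; first exact: size_oppR.
  + by move=> i hi; rewrite nth_oppR ?hx ?oppr0 //; apply: ltnW (leq_trans hi kl).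
  + by rewrite psum_oppR px oppr0.
- move=> r x _ [sx hx px]; split; first exact: size_mulR.
  + move=> i hi; have il : (i <= l)%N by apply: ltnW (leq_trans hi kl).
    rewrite mulR_nth; last exact: il.
    rewrite hx; last exact: hi.
    rewrite (psum_shift p l i k x (ltnW hi)); last first.
      by move=> s /andP[_ hs]; apply: hx.
      by apply: leq_trans kl _.
    by rewrite px mulr0 mul0r addr0.
  + by rewrite psum_mul px mulr0.
Qed.

Lemma gen_zero p k A : (forall a, A a -> a = zeroR k) ->
  forall x, gen p k A x <-> x = zeroR k.
Proof.
move=> hA x; split.
  by apply: (@gen_min p k A (fun x => x = zeroR k)); [exact: zero_ideal | exact: hA].
by move=> -> J [_ ? _ _ _].
Qed.

Lemma ind_zero k : ind k.+1 k (zeroR k) = zeroR k.+1.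
Proof.
apply: (@seq_eq k.+1); [exact: size_ind | exact: size_zeroR |].
by move=> i hi; rewrite nth_ind // !nth_zeroR if_same.
Qed.

Lemma zero_pow (e : nat) (p : nat) : (0 < p)%N -> (0 : int) ^+ (p ^ e) = 0.
Proof. by move=> p0; rewrite expr0n expn_eq0 -[p == 0%N]negbK -lt0n p0. Qed.

Lemma psum_zero' p k i : psum p k i (zeroR k) = 0.
Proof. exact: psum_zero. Qed.

Lemma jnd_zero p k : (0 < p)%N -> jnd p k.+1 k (zeroR k) = zeroR k.+1.
Proof.
move=> p0; apply: (@seq_eq k.+1); [exact: size_jnd | exact: size_zeroR |].
move=> i hi; rewrite nth_jnd // !nth_zeroR !psum_zero !zero_pow // subrr div0z.
by rewrite !if_same.
Qed.

Lemma Siter_zero p k : (0 < p)%N -> forall x, Siter p k x <-> x = zeroR k.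
Proof.
move=> p0; elim: k => [|k IH] x; first by [].
rewrite /= /Sop; apply: gen_zero => a [b /IH -> [->|->]].
  exact: ind_zero.
exact: jnd_zero.
Qed.

Lemma Liter_ker p n k : prime p -> forall x, Liter p n k (Siter p k) x <-> kerP p (k+n) k x.
Proof.
move=> hp; have p0 := prime_gt0 hp.
elim: n => [|n IH] x.
  rewrite addn0 /= Siter_zero //; split.
    by move=> ->; split; [exact: size_zeroR | move=> i _; exact: nth_zeroR | exact: psum_zero].
  move=> [sx hx px]; apply: (@seq_eq k); [exact: sx | exact: size_zeroR |].
  move=> i hi; rewrite nth_zeroR; case: (ltngtP i k) hi => // [/hx //|-> _].
  by move: px; rewrite (psum_rec p k k x (leqnn k)) psum_last subnn pz0 mulr1 addr0.
rewrite /= /Lop addnS.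
have km : (k <= k + n)%N by apply: leq_addr.
have pn0 : pz p 1 != 0 by rewrite pzE expr1 eqz_nat -lt0n.
split.
  move=> [sx /IH [_ hy py]]; split.
  - exact: sx.
  - move=> i hi; have := hy i hi.
    rewrite nth_res; last by apply: ltnW (leq_trans hi km).
    rewrite (leq_trans hi km) subSnn => /eqP; rewrite mulf_eq0 (negbTE pn0) /=.
    by move/eqP.
  - by rewrite -psum_res.
move=> [sx hx px]; split; first exact: sx.
apply/IH; split.
- exact: size_res.
- move=> i hi; rewrite nth_res; last by apply: ltnW (leq_trans hi km).
  by rewrite (leq_trans hi km) hx // mulr0.
- by rewrite psum_res.
Qed.

Lemma F_ker p l k i : (k <= i < l)%N -> kerP p l k (F p l i).
Proof.
move=> /andP[ki il]; split.
- exact: size_F.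
- move=> j hj; have jl : (j <= l)%N by apply: ltnW (leq_trans hj (leq_trans ki (ltnW il))).
  rewrite nth_F; last exact: jl.
  rewrite (ltn_eqF (leq_trans hj ki)) (ltn_eqF (leq_trans hj (leq_trans ki (ltnW il)))).
  by rewrite mul0r subrr.
- rewrite F_def psum_addR psum_oppR psum_intR; last exact: (leq_trans ki (ltnW il)).
  by rewrite psum_X ?subrr // ki ltnW.
Qed.

Lemma ker_sub p l k J : (0 < p)%N -> (k <= l)%N -> is_ideal p l J ->
  (forall i, (k <= i < l)%N -> J (F p l i)) -> forall x, kerP p l k x -> J x.
Proof.
move=> p0 kl hJ hF.
case: (hJ) => _ hzero hadd _ hmul.
suff H : forall d, (d <= l - k)%N -> forall x, kerP p l k x ->
    (forall i, (i < l - d)%N -> x`_i = 0) -> J x.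
  move=> x hx; apply: (H (l - k)%N (leqnn _) x hx).
  by rewrite subKn //; case: hx.
elim=> [|d IH] hd x hx hz.
  have -> : x = zeroR l; last exact: hzero.
  case: hx => sx hx0 px.
  apply: (@seq_eq l); [exact: sx | exact: size_zeroR |].
  move=> i hi; rewrite nth_zeroR; case: (ltngtP i l) hi => // [hil _|-> _].
    by apply: hz; rewrite subn0.
  move: px; rewrite (psum_shift p l k l x kl (leqnSn l)); last first.
    by move=> s /andP[_ hs]; apply: hz; rewrite subn0.
  by rewrite (psum_rec p l l x (leqnn l)) psum_last subnn pz0 mulr1 addr0.
set j := (l - d.+1)%N.
have jl : (j < l)%N by rewrite /j; lia.
have kj : (k <= j)%N by rewrite /j; lia.
have hFj : kerP p l k (F p l j) by apply: F_ker; rewrite kj jl.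
have hK := kerP_ideal p l k p0 kl.
case: (hK) => _ _ kadd _ kmul.
set x' := addR l x (mulR p l (intR l (- x`_j)) (F p l j)).
have ex' : forall i, (i <= l)%N -> x'`_i = x`_i - x`_j * (F p l j)`_i.
  by move=> i hi; rewrite /x' nth_addR // nth_mulR_intR // mulNr.
have Jx' : J x'.
  apply: (IH (ltnW hd)).
    by apply: kadd => //; apply: kmul => //; apply: size_intR.
  move=> i hi; have il : (i <= l)%N by lia.
  rewrite ex' // nth_F //.
  case: (ltngtP i j) => hij.
  - rewrite hz; last by rewrite /j in hij; lia.
    rewrite (ltn_eqF (ltn_trans hij jl)) /=.
    by rewrite mul0r subrr mulr0 subrr.
  - by rewrite /j in hij; lia.
  - by rewrite hij (ltn_eqF jl) /= mul0r subr0 mulr1 subrr.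
have -> : x = addR l x' (mulR p l (intR l (x`_j)) (F p l j)).
  apply: (@seq_eq l); [by case: hx | exact: size_addR |].
  by move=> i hi; rewrite nth_addR // nth_mulR_intR // ex' // subrK.
by apply: hadd => //; apply: hmul => //; [apply: size_intR | apply: hF; rewrite kj jl].
Qed.


Lemma intR0 l : intR l 0 = zeroR l.
Proof.
apply: (@seq_eq l); [exact: size_intR | exact: size_zeroR |].
by move=> i hi; rewrite nth_intR // nth_zeroR if_same.
Qed.

Lemma ker_zero p l : prime p -> forall x, kerP p l l x <-> x = zeroR l.
Proof.
move=> hp x; rewrite -[l in kerP p l]addn0 -(Liter_ker p 0 l hp x) /=.
exact: Siter_zero p l (prime_gt0 hp) x.
Qed.

Lemma Jid_ker p l k : prime p -> (1 <= l)%N -> (k <= l)%N ->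
  forall x, Jid p l k 0 x <-> kerP p l k x.
Proof.
move=> hp l1 kl x; have p0 := prime_gt0 hp; rewrite /Jid.
case: (ltngtP k l) kl => // [klt|->] _.
  have -> : (k <= l.-1)%N && (0 < l)%N = true by apply/andP; split; lia.
  have hG : forall a, (a = intR l 0 \/ exists2 i : nat, (k <= i < l)%N & a = F p l i) -> elt l a.
    by move=> a [->|[i _ ->]]; [exact: size_intR | exact: size_F].
  split.
    apply: gen_min; first exact: kerP_ideal p l k p0 (ltnW klt).
    move=> a [->|[i hi ->]]; last exact: F_ker.
    by rewrite intR0; split; [exact: size_zeroR | move=> i _; exact: nth_zeroR | exact: psum_zero].
  apply: (ker_sub p l k _ p0 (ltnW klt) (gen_ideal p l _ hG)).
  by move=> i hi; apply: gen_base; right; exists i.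
have -> : (l <= l.-1)%N && (0 < l)%N = false by apply/negbTE; apply/negP => /andP[]; lia.
rewrite ker_zero //; apply: gen_zero => a ->; exact: intR0.
Qed.

Lemma ind_ker p m k a : (k <= m)%N -> kerP p m k a -> kerP p m.+1 k (ind m.+1 m a).
Proof.
move=> km [sa ha pa]; split.
- exact: size_ind.
- move=> i hi; rewrite nth_ind; last by lia.
  by rewrite (leq_trans (ltnW hi) km) ha.
- by rewrite psum_ind // pa mulr0.
Qed.

Lemma psum_zero_below p m k a i : (i <= k)%N -> (k <= m)%N -> kerP p m k a -> psum p m i a = 0.
Proof.
move=> ik km [sa ha pa].
rewrite (psum_shift p m i k a ik (leq_trans km (leqnSn m))) //.
by move=> s /andP[_ hs]; apply: ha.
Qed.

Lemma psum_at p m a : psum p m m a = a`_m.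
Proof. by rewrite (psum_rec p m m a (leqnn m)) psum_last subnn pz0 mulr1 addr0. Qed.

Lemma tele (f : nat -> int) k m : (k <= m)%N ->
  \sum_(k <= s < m) (f s - f s.+1) = f k - f m.
Proof.
move=> km; rewrite -(opprB (f m)) -(telescope_sumr f km) -sumrN.
by apply: eq_big_nat => s _; rewrite opprB.
Qed.

Lemma jnd_ker p m k a : prime p -> (k <= m)%N -> kerP p m k a ->
  kerP p m.+1 k (jnd p m.+1 m a).
Proof.
move=> hp km ha; have p0 := prime_gt0 hp.
have hK := ha; case: ha => sa hza pa.
split.
- exact: size_jnd.
- move=> i hi; have im : (i < m)%N by lia.
  rewrite nth_jnd; last by lia.
  rewrite (ltn_eqF (ltn_trans im (ltnSn m))) leqNgt im /=.
  rewrite (psum_zero_below p m k a i (ltnW hi) km hK).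
  rewrite (psum_zero_below p m k a i.+1 hi km hK).
  by rewrite subrr div0z.
rewrite psum_split2; last exact: km.
set P := fun s => psum p m s a.
have E1 : \sum_(k <= s < m) (jnd p m.+1 m a)`_s * pz p (m.+1 - s)
        = \sum_(k <= s < m) (P s ^+ p - P s.+1 ^+ p).
  apply: eq_big_nat => s /andP[ks sm].
  rewrite nth_jnd; last by lia.
  rewrite (ltn_eqF (ltn_trans sm (ltnSn m))) leqNgt sm /= subSnn expn1.
  apply: divzK.
  have sm' : (s <= m)%N by apply: ltnW.
  rewrite /P (psum_rec p m s a sm') [a`_s * _ + _]addrC.
  have -> : pz p (m.+1 - s) = p%:Z * pz p (m - s) by rewrite !pzE (subSn sm') exprS.
  apply: binom_dvd; first exact: hp.
    by rewrite pzE; apply: dvdz_exp; [rewrite subn_gt0 | apply: dvdzz].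
  exact: dvdz_mull.
rewrite E1 tele; last exact: km.
rewrite /P pa psum_at.
rewrite nth_jnd; last exact: leqnSn.
rewrite (ltn_eqF (ltnSn m)) leqnn subSnn subnn expn1 expn0 expr1.
rewrite divzK; last by rewrite pzE expr1; apply: fermat_int.
rewrite nth_jnd; last exact: leqnn.
rewrite eqxx expr0n (gtn_eqF p0) /=.
ring.
Qed.

Lemma F_step p m i j : (i < m)%N -> (j <= m.+1)%N ->
  (F p m.+1 i)`_j = (ind m.+1 m (F p m i))`_j + pz p (m - i) * (F p m.+1 m)`_j.
Proof.
move=> im jm.
have hpz : pz p (m.+1 - i) = pz p (m - i) * pz p 1 by rewrite !pzE (subSn (ltnW im)) exprS expr1 mulrC.
rewrite nth_ind; last exact: jm.
rewrite (nth_F p m.+1 i j jm) (nth_F p m.+1 m j jm) subSnn.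
case: (ltngtP j m.+1) jm => // [jlt|->] _.
  have jm' : (j <= m)%N by [].
  rewrite jm' (nth_F p m i j jm') /=. ring.
rewrite (gtn_eqF (ltn_trans im (ltnSn m))) (gtn_eqF (ltnSn m)) ltnn hpz /=.
ring.
Qed.

Lemma F_top p n j : prime p -> (j <= n.+2)%N ->
  (F p n.+2 n.+1)`_j = (jnd p n.+2 n.+1 (F p n.+1 n))`_j
     + ((- p%:Z) ^+ (p - 2)) * (ind n.+2 n.+1 (F p n.+1 n))`_j.
Proof.
move=> hp jm.
set a := F p n.+1 n; set q := (- p%:Z) ^+ (p - 2).
have p1 := prime_gt1 hp.
have pp0 : p%:Z != 0 by rewrite eqz_nat -lt0n prime_gt0.
have hq : (- p%:Z) ^+ p = q * p%:Z ^+ 2.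
  by rewrite /q -(sqrrN (p%:Z)) -exprD subnK.
have pz1 : pz p 1 = p%:Z by rewrite pzE expr1.
have am : a`_n.+1 = - p%:Z.
  rewrite /a nth_F; last exact: leqnn.
  by rewrite (gtn_eqF (ltnSn n)) eqxx subSnn pz1 /= mul1r sub0r.
have ka : kerP p n.+1 n a by apply: F_ker; rewrite leqnn ltnSn.
have Pn : psum p n.+1 n a = 0 by case: ka.
have Pm : psum p n.+1 n.+1 a = - p%:Z by rewrite psum_at am.
rewrite nth_jnd; last exact: jm.
rewrite nth_ind; last exact: jm.
rewrite nth_F; last exact: jm.
case: (ltngtP j n.+2) jm => // [jlt|->] _; last first.
  rewrite (gtn_eqF (ltnSn n.+1)) ltnn am subSnn pz1 /=.
  ring.
rewrite /=.
case: (ltngtP j n.+1) => [jlt2|jgt|->]; [| lia |]; last first.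
  rewrite subSnn subnn expn1 expn0 expr1 am pz1 hq /=.
  have -> : q * p%:Z ^+ 2 - - p%:Z = (q * p%:Z + 1) * p%:Z by ring.
  rewrite mulzK; last exact: pp0.
  ring.
rewrite subSnn expn1.
case: (ltngtP j n) => [jlt3|jgt|->]; [| lia |]; last first.
  rewrite Pn Pm hq expr0n (gtn_eqF (prime_gt0 hp)) /=.
  have -> : (n.+2 - n = 2)%N by lia.
  rewrite pzE.
  have -> : 0 - q * p%:Z ^+ 2 = (- q) * p%:Z ^+ 2 by ring.
  rewrite mulzK; last by rewrite expf_eq0 (negbTE pp0) andbF.
  rewrite /a nth_F; last exact: leqnSn.
  rewrite eqxx (ltn_eqF (ltnSn n)) /=. ring.
rewrite (psum_zero_below p n.+1 n a j (ltnW jlt3) (leqnSn n) ka).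
rewrite (psum_zero_below p n.+1 n a j.+1 jlt3 (leqnSn n) ka).
rewrite [X in (X %/ _)%Z]subrr div0z.
rewrite /a nth_F; last by lia.
rewrite (ltn_eqF jlt3) (ltn_eqF (ltn_trans jlt3 (ltnSn n))) /=.
ring.
Qed.

Lemma S_ker p m k I : prime p -> (k < m)%N -> (forall a, I a <-> kerP p m k a) ->
  forall x, Sop p m I x <-> kerP p m.+1 k x.
Proof.
move=> hp km hI x; have p0 := prime_gt0 hp.
set A := fun y => exists2 a, I a & y = ind m.+1 m a \/ y = jnd p m.+1 m a.
have hA : forall y, A y -> elt m.+1 y.
  by move=> y [a _ [->|->]]; [exact: size_ind | exact: size_jnd].
have hS : is_ideal p m.+1 (Sop p m I) := gen_ideal p m.+1 A hA.
case: (hS) => _ _ sadd _ smul.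
split.
  apply: gen_min; first exact: (kerP_ideal p m.+1 k p0 (leq_trans (ltnW km) (leqnSn m))).
  move=> y [a /hI ha [->|->]]; first exact: (ind_ker p m k a (ltnW km) ha).
  exact: (jnd_ker p m k a hp (ltnW km) ha).
apply: (ker_sub p m.+1 k _ p0 (leq_trans (ltnW km) (leqnSn m)) hS).
have gI : forall a, kerP p m k a -> Sop p m I (ind m.+1 m a).
  by move=> a ha; apply: gen_base; exists a; [apply/hI | left].
have gJ : forall a, kerP p m k a -> Sop p m I (jnd p m.+1 m a).
  by move=> a ha; apply: gen_base; exists a; [apply/hI | right].
have Fm : Sop p m I (F p m.+1 m).
  case: m km hI A hA hS sadd smul gI gJ => [//|n] km hI A hA hS sadd smul gI gJ.
  have ka : kerP p n.+1 k (F p n.+1 n) by apply: F_ker; rewrite -ltnS km ltnSn.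
  have -> : F p n.+2 n.+1 = addR n.+2 (jnd p n.+2 n.+1 (F p n.+1 n))
      (mulR p n.+2 (intR n.+2 ((- p%:Z) ^+ (p - 2))) (ind n.+2 n.+1 (F p n.+1 n))).
    apply: (@seq_eq n.+2); [exact: size_F | exact: size_addR |].
    move=> j hj; rewrite nth_addR; last exact: hj.
    rewrite nth_mulR_intR; last exact: hj.
    exact: F_top.
  apply: sadd; first exact: gJ.
  apply: smul; [exact: size_intR | exact: gI].
move=> i /andP[ki im].
case: (ltngtP i m) => [iltm|igt|->]; [ | lia | exact: Fm].
have -> : F p m.+1 i = addR m.+1 (ind m.+1 m (F p m i))
    (mulR p m.+1 (intR m.+1 (pz p (m - i))) (F p m.+1 m)).
  apply: (@seq_eq m.+1); [exact: size_F | exact: size_addR |].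
  move=> j hj; rewrite nth_addR; last exact: hj.
  rewrite nth_mulR_intR; last exact: hj.
  exact: F_step.
apply: sadd.
  by apply: gI; apply: F_ker; rewrite ki iltm.
by apply: smul; [exact: size_intR | exact: Fm].
Qed.

Theorem proposition6 (p r : nat) (hp : prime p) :
  [/\ (forall k : nat, (k <= r)%N ->
         same_ideal (Siter p k) (fun x => x = zeroR k)),
      (forall l k : nat, (1 <= l <= r)%N -> (k <= l)%N ->
         same_ideal (Liter p (l - k) k (Siter p k)) (Jid p l k 0)) &
      (forall l k : nat, (1 <= l <= r)%N -> (k + 2 <= l)%N ->
         same_ideal (Sop p (l - 1) (Liter p (l - k - 1) k (Siter p k)))
                    (Liter p (l - k) k (Siter p k)))].
Proof.
have p0 := prime_gt0 hp.
split.
- by move=> k _ x; exact: (Siter_zero p k p0 x).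
- move=> l k /andP[l1 _] kl x.
  have [n En] : exists n, l = (k + n)%N by exists (l - k)%N; rewrite subnKC.
  subst l; rewrite addKn.
  have e1 := Liter_ker p n k hp x.
  have e2 := Jid_ker p (k + n) k hp l1 kl x.
  by split => h; [apply/e2/e1 | apply/e1/e2].
- move=> l k /andP[l1 _] hkl x.
  have [n En] : exists n, l = (k + n.+2)%N by exists (l - k - 2)%N; lia.
  subst l.
  rewrite (_ : (k + n.+2 - 1 = k + n.+1)%N); last by lia.
  rewrite (_ : (k + n.+2 - k - 1 = n.+1)%N); last by lia.
  rewrite (_ : (k + n.+2 - k = n.+2)%N); last by lia.
  have e1 := S_ker p (k + n.+1) k (Liter p n.+1 k (Siter p k)) hp
     (ltac:(lia)) (fun a => Liter_ker p n.+1 k hp a) x.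
  have e2 := Liter_ker p n.+2 k hp x.
  rewrite -addnS in e1.
  by split => h; [apply/e2/e1 | apply/e1/e2].
Qed.
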